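(* Let $g \geq 3$ be an odd integer. If $G$ is a graph on $n$ vertices whose girth is $g$ or $g+1$, then $$P(G,m) - P_{DP}(G,m) = O(m^{n-g}) \quad \text{as } m \to \infty.$$ Consequently, for every graph $M$, $$P(M,m) - P_{DP}(M,m) = O(m^{|V(M)|-3}) \quad \text{as } m \to \infty.$$
   Context: All graphs are finite and simple. The girth of a graph is the length of a shortest cycle (infinite if the graph is acyclic). For $m \in \mathbb{N}$, $[m]=\{1,\dots,m\}$, and $P(G,m)$ (the chromatic polynomial) is the number of proper colorings $V(G) \to [m]$. For $S,U \subseteq V(H)$, $E_H(S,U)$ is the set of edges of $H$ with one endpoint in $S$ and the other in $U$. A cover of a graph $G$ is a pair $\mathcal{H}=(L,H)$ where $H$ is a graph and $L: V(G)\to \mathcal{P}(V(H))$ satisfies: (1) $\{L(u): u\in V(G)\}$ is a partition of $V(H)$; (2) for each $u \in V(G)$, $H[L(u)]$ is complete; (3) if $E_H(L(u),L(v))\neq\emptyset$ then $u=v$ or $uv\in E(G)$; (4) if $uv \in E(G)$ then $E_H(L(u),L(v))$ is a matching (possibly empty). The cover is $m$-fold if $|L(u)|=m$ for all $u\in V(G)$. An $\mathcal{H}$-coloring of $G$ is an independent set $I$ of $H$ with $|I|=|V(G)|$ (equivalently, an independent set with $|I\cap L(u)|=1$ for every $u$). $P_{DP}(G,\mathcal{H})$ is the number of $\mathcal{H}$-colorings of $G$, and the DP color function is $P_{DP}(G,m)=\min P_{DP}(G,\mathcal{H})$, the minimum over all $m$-fold covers $\mathcal{H}$ of $G$, for $m\in\mathbb{N}$.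 *)

(* Defs.v *)
From mathcomp Require Import all_boot boolp.
Set Implicit Arguments. Unset Strict Implicit. Unset Printing Implicit Defensive.

(* A finite simple graph G is a vertex type V : finType with an adjacency
   relation e : rel V that is symmetric and irreflexive (hypotheses in the
   theorem). *)

Section Graphs.
Variable V : finType.
Variable e : rel V.

Definition is_cycle (c : seq V) : Prop := [/\ 3 <= size c, uniq c & cycle e c].

Definition girth_is (g : nat) : Prop :=
  (exists c, is_cycle c /\ size c = g) /\ (forall c, is_cycle c -> g <= size c).

Definition proper_coloring (m : nat) (f : {ffun V -> 'I_m}) : bool :=
  [forall u, forall v, e u v ==> (f u != f v)].

Definition chrom (m : nat) : nat := #|[set f : {ffun V -> 'I_m} | proper_coloring f]|.

Definition is_mfold_cover (m : nat) (HT : finType) (h : rel HT)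
    (L : V -> {set HT}) : Prop :=
  symmetric h /\ irreflexive h /\
   (forall x : HT, exists u, x \in L u) /\
   (forall u v, u != v -> [disjoint L u & L v]) /\
   (forall u x y, x \in L u -> y \in L u -> x != y -> h x y) /\
   (forall u v x y, x \in L u -> y \in L v -> h x y -> u = v \/ e u v) /\
   (forall u v, e u v ->
      (forall x y y', x \in L u -> y \in L v -> y' \in L v ->
                      h x y -> h x y' -> y = y') /\
      (forall x x' y, x \in L u -> x' \in L u -> y \in L v ->
                      h x y -> h x' y -> x = x')) /\
   (forall u, #|L u| = m).

Definition independent (HT : finType) (h : rel HT) (I : {set HT}) : bool :=
  [forall x in I, forall y in I, ~~ h x y].

Definition num_cover_colorings (HT : finType) (h : rel HT) : nat :=
  #|[set I : {set HT} | independent h I && (#|I| == #|V|)]|.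

Definition dp_achievable (m k : nat) : Prop :=
  exists (HT : finType) (h : rel HT) (L : V -> {set HT}),
    is_mfold_cover m h L /\ num_cover_colorings h = k.

(* The DP color function: the minimum over all m-fold covers. (An m-fold
   cover always exists, so the default branch is never used.) *)
Definition P_DP (m : nat) : nat :=
  match pselect (exists k, `[< dp_achievable m k >]) with
  | left pf => ex_minn pf
  | right _ => 0
  end.

End Graphs.

Definition absdiff (a b : nat) : nat := (a - b) + (b - a).

(* Main.v *)
Require Import Defs.
From mathcomp Require Import all_boot boolp.
From mathcomp Require Import all_order all_algebra zify.
Set Implicit Arguments. Unset Strict Implicit. Unset Printing Implicit Defensive.

Module G1M.

Section GraphPart.
Variable V : finType.
Variable e : rel V.
Hypothesis esym : symmetric e.
Hypothesis eirr : irreflexive e.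

Implicit Types (A B : {set V * V}) (p q : V * V).
Definition ltv (u v : V) := (enum_rank u < enum_rank v)%N.
Definition Ed : {set V * V} := [set p | e p.1 p.2 && ltv p.1 p.2].
Definition incid (x : V) (p : V * V) := (p.1 == x) || (p.2 == x).
Definition deg (A : {set V * V}) x := #|[set p in A | incid x p]|.
Definition adjA (A : {set V * V}) x y := ((x, y) \in A) || ((y, x) \in A).

Inductive red : {set V * V} -> Prop :=
| red0 : red set0
| redS (A : {set V * V}) p x : p \in A -> incid x p -> deg A x = 1 -> red (A :\ p) -> red A.

Definition core (A : {set V * V}) := A != set0 /\ forall x, deg A x != 1.

Lemma Ed_neq p : p \in Ed -> p.1 != p.2.
Proof.
rewrite inE => /andP[hp _]; apply/eqP => E; by rewrite E eirr in hp.
Qed.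

Lemma ltv_anti u v : ltv u v -> ltv v u -> False.
Proof. rewrite /ltv => h1 h2; have := ltn_trans h1 h2; by rewrite ltnn. Qed.

Lemma Ed_det p q x y : p \in Ed -> q \in Ed -> incid x p -> incid y p ->
  incid x q -> incid y q -> x != y -> p = q.
Proof.
case: p => [a b]; case: q => [c d]; rewrite /incid !inE /= => /andP[_ lab] /andP[_ lcd].
move=> + + + + xy.
do 4 (case/orP => /eqP ?); subst => //; try by rewrite eqxx in xy.
all: exfalso; first [exact: (ltv_anti lab lcd) | exact: (ltv_anti lcd lab)].
Qed.

Lemma handshake A : (forall p, p \in A -> p.1 != p.2) ->
  \sum_x deg A x = 2 * #|A|.
Proof.
move=> Hn.
have -> : \sum_x deg A x = \sum_x \sum_(p in A) (incid x p : nat).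
  apply: eq_bigr => x _; rewrite /deg -sum1_card big_mkcond /=.
  rewrite [RHS]big_mkcond /=; apply: eq_bigr => p _; rewrite inE.
  by case: (p \in A); case: (incid x p).
rewrite exchange_big /= -sum1_card big_distrr /=; apply: eq_bigr => p pA.
rewrite muln1 (bigD1 p.1) // (bigD1 p.2) /=; last by rewrite eq_sym Hn.
rewrite big1 ?addn0.
  by rewrite /incid eqxx /= eqxx orbT.
move=> x /andP[x1 x2]; rewrite /incid; apply/eqP; rewrite eqb0.
by rewrite negb_or ![_ == x]eq_sym x1 x2.
Qed.


Lemma nonred_core A : ~ red A -> exists2 A' : {set V * V}, A' \subset A & core A'.
Proof.
have [n] := ubnP #|A|; elim: n A => // n IH A ltA nred.
case: (boolP [exists p in A, exists x, incid x p && (deg A x == 1)]).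
  case/exists_inP => p pA /existsP[x /andP[ix /eqP dx]].
  have nred' : ~ red (A :\ p) by move=> r; apply: nred; exact: redS pA ix dx r.
  have ltA' : #|A :\ p| < n.
    by move: ltA; rewrite (cardsD1 p A) pA add1n ltnS.
  have [A' sA' cA'] := IH _ ltA' nred'.
  by exists A' => //; apply: subset_trans sA' (subsetDl _ _).
move=> nleaf; exists A => //; split.
  by apply/eqP => A0; apply: nred; rewrite A0; exact: red0.
move=> x; apply/eqP => dx.
have : 0 < deg A x by rewrite dx.
rewrite /deg card_gt0 => /set0Pn[p]; rewrite inE => /andP[pA ix].
move/negP: nleaf; apply; apply/exists_inP; exists p => //.
by apply/existsP; exists x; rewrite ix dx eqxx.
Qed.

Lemma adjA_Ed A x y : A \subset Ed -> adjA A x y -> e x y.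
Proof.
move=> /subsetP sA /orP[] /sA; rewrite inE => /andP[] //= h _.
by rewrite esym.
Qed.

Lemma adjA_sym A : symmetric (adjA A).
Proof. by move=> x y; rewrite /adjA orbC. Qed.

Lemma adjA_deg A x y : adjA A x y -> 0 < deg A x.
Proof.
rewrite /deg card_gt0 => /orP[] h; apply/set0Pn.
  by exists (x, y); rewrite inE h /incid eqxx.
by exists (y, x); rewrite inE h /incid eqxx orbT.
Qed.

Definition other x p := if p.1 == x then p.2 else p.1.

Lemma deg2_nb A x y : A \subset Ed -> 1 < deg A x -> adjA A x y ->
  exists2 z, z != y & adjA A x z.
Proof.
move=> sA /card_gt1P[q1 [q2 [q1i q2i nq]]] _.
move: q1i q2i; rewrite !inE => /andP[q1A i1] /andP[q2A i2].
have key q : q \in A -> incid x q -> adjA A x (other x q) /\ incid (other x q) q.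
  case: q => a b qA; rewrite /incid /other /= => /orP[]/eqP E; subst.
    by rewrite eqxx /adjA qA eqxx orbT.
  case: eqP => [E|_]; first by subst; rewrite /adjA qA eqxx.
  by rewrite /adjA qA orbT eqxx.
have [a1 o1] := key _ q1A i1; have [a2 o2] := key _ q2A i2.
have ne : other x q1 != other x q2.
  apply/eqP => E; move/negP: nq; apply; apply/eqP.
  have q1E := subsetP sA _ q1A; have q2E := subsetP sA _ q2A.
  apply: (Ed_det (x := x) (y := other x q1)) => //; first by rewrite E.
  by rewrite eq_sym; apply: contraTneq (adjA_Ed sA a1) => ->; rewrite eirr.
case: (eqVneq (other x q1) y) => [E|]; last by exists (other x q1).
by exists (other x q2) => //; rewrite -E eq_sym.
Qed.


Lemma close_cycle A z t w : A \subset Ed -> uniq (z :: t) ->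
  path (adjA A) z t -> w \in t -> w != head z t -> adjA A z w ->
  exists c, is_cycle e c /\ cycle (adjA A) c.
Proof.
move=> sA ut pt wt wh azw.
set i := index w t.
have it : i < size t by rewrite index_mem.
have i0 : 0 < i.
  rewrite lt0n; apply: contra wh => /eqP i0.
  by rewrite -(nth_index z wt) -/i i0; case: (t) => [|? ?].
have ct : cycle (adjA A) (z :: take i.+1 t).
  rewrite /= rcons_path take_path //= (last_nth z) size_takel //=.
  idtac.
  by rewrite nth_take // nth_index // adjA_sym.
exists (z :: take i.+1 t); split => //; split.
- by rewrite /= size_takel.
- by have := take_uniq i.+2 ut.
- by apply: sub_path ct => a b; exact: adjA_Ed.
Qed.

Lemma ext_cycle A k : A \subset Ed -> core A -> forall s, uniq s ->
  sorted (adjA A) s -> 1 < size s -> #|V| - size s <= k ->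
  exists c, is_cycle e c /\ cycle (adjA A) c.
Proof.
move=> sA [_ cA]; elim: k => [|k IH] [|z [|y0 t']] //= us ss _ gap.
all: have azy : adjA A z y0 by case/andP: ss.
all: have dz : 1 < deg A z by have := adjA_deg azy; have := cA z; case: (deg A z) => [|[|]].
all: have [w wy azw] := deg2_nb sA dz azy.
all: have wz : w != z by apply: contraTneq (adjA_Ed sA azw) => ->; rewrite eirr.
all: case: (boolP (w \in y0 :: t')) => wt.
- by apply: (close_cycle (t := y0 :: t') sA us ss wt wy azw).
- have uw : uniq (w :: z :: y0 :: t') by rewrite /= inE negb_or wz wt us.
  have := max_card (mem (w :: z :: y0 :: t')).
  rewrite (card_uniqP uw) /=; move: gap => /=; lia.
- by apply: (close_cycle (t := y0 :: t') sA us ss wt wy azw).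
- have uw : uniq (w :: z :: y0 :: t') by rewrite /= inE negb_or wz wt us.
  apply: (IH (w :: z :: y0 :: t')) => //=.
    by rewrite adjA_sym azw.
  have := max_card (mem (w :: z :: y0 :: t')).
  rewrite (card_uniqP uw) /=; move: gap => /=; lia.
Qed.

Definition touched A := [set x | 0 < deg A x].

Lemma Ed_sub_neq A : A \subset Ed -> forall p, p \in A -> p.1 != p.2.
Proof. by move=> /subsetP sA p /sA; exact: Ed_neq. Qed.

Lemma deg_sumT A : core A ->
  \sum_x deg A x = 2 * #|touched A| + \sum_(x in touched A) (deg A x - 2).
Proof.
move=> [_ cA].
rewrite (bigID (mem (touched A))) /= [X in _ + X]big1; last first.
  by move=> x; rewrite inE -eqn0Ngt => /eqP.
rewrite addn0 mulnC -sum_nat_const -big_split /=; apply: eq_bigr => x.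
rewrite inE => dx; rewrite subnKC //; move: dx (cA x); case: (deg A x) => [|[|]] //.
Qed.

Lemma core_size g A : A \subset Ed -> core A ->
  (forall c, is_cycle e c -> g <= size c) ->
  g <= #|touched A| /\ #|touched A| <= #|A|.
Proof.
move=> sA cA gir; split; last first.
  have := handshake (Ed_sub_neq sA); rewrite deg_sumT // => E.
  by rewrite -(leq_pmul2l (isT : 0 < 2)) -E leq_addr.
case: cA => [/set0Pn[q qA] cA'].
have qn := Ed_sub_neq sA qA.
have [c [cc ca]] : exists c, is_cycle e c /\ cycle (adjA A) c.
  apply: (ext_cycle (k := #|V|) sA (conj (introN eqP (fun E => _)) cA') (s := [:: q.1; q.2])) => //=.
  - by move=> E; move: qA; rewrite E inE.
  - by rewrite inE qn.
  - by rewrite andbT /adjA -surjective_pairing qA.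
  - exact: leq_subr.
apply: (leq_trans (gir _ cc)); case: cc => _ uc _.
rewrite -(card_uniqP uc); apply: subset_leq_card; apply/subsetP => x xc.
by rewrite inE; apply: adjA_deg (next_cycle ca xc).
Qed.

Lemma small_red g A : A \subset Ed -> (forall c, is_cycle e c -> g <= size c) ->
  #|A| < g -> red A.
Proof.
move=> sA gir ltA; apply: contrapT => nr.
have [A' sA' cA'] := nonred_core nr.
have [h1 h2] := core_size (subset_trans sA' sA) cA' gir.
have := subset_leq_card sA'; lia.
Qed.


Lemma exact_g g A : A \subset Ed -> (forall c, is_cycle e c -> g <= size c) ->
  #|A| = g -> ~ red A ->
  [/\ core A, forall x, deg A x = 0 \/ deg A x = 2 & #|touched A| <= g].
Proof.
move=> sA gir cardA nr.
have [A' sA' cA'] := nonred_core nr.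
have [h1 h2] := core_size (subset_trans sA' sA) cA' gir.
have EA : A' = A.
  apply/eqP; rewrite eqEcard sA' /= cardA; exact: leq_trans h1 h2.
subst A'.
have := handshake (Ed_sub_neq sA); rewrite deg_sumT // => E.
have S0 : \sum_(x in touched A) (deg A x - 2) = 0.
  apply/eqP; rewrite -(eqn_add2l (2 * #|touched A|)) addn0; apply/eqP.
  apply/eqP; rewrite eqn_leq leq_addr andbT E cardA leq_mul2l /=; exact: h1.
split => //; last by lia.
move=> x; case: (boolP (x \in touched A)) => xT; last first.
  by left; move: xT; rewrite inE -eqn0Ngt => /eqP.
right; move/eqP: S0; rewrite sum_nat_eq0 => /forall_inP/(_ x xT).
case: cA' => _ /(_ x); move: xT; rewrite inE.
by case: (deg A x) => [|[|[|]]].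
Qed.

Lemma deg_D1 A p x : p \in A -> deg A x = incid x p + deg (A :\ p) x.
Proof.
move=> pA; rewrite /deg; case: (boolP (incid x p)) => ip /=.
  rewrite (cardsD1 p) inE pA ip add1n; congr (_.+1).
  by apply: eq_card => r; rewrite !inE andbA.
by apply: eq_card => r; rewrite !inE; case: eqP => [->|]; rewrite ?pA ?(negbTE ip) ?andbF.
Qed.

Lemma g1_red g A : 0 < g -> A \subset Ed -> (forall c, is_cycle e c -> g <= size c) ->
  #|A| = g.+1 -> exists2 p, p \in A & red (A :\ p).
Proof.
move=> g0 sA gir cardA; apply: contrapT => nex.
have nr p : p \in A -> ~ red (A :\ p) by move=> pA r; apply: nex; exists p.
have cD p : p \in A -> #|A :\ p| = g by move=> pA; move: cardA; rewrite (cardsD1 p) pA add1n; case.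
have : 1 < #|A| by rewrite cardA ltnS.
case/card_gt1P => p [q [pA qA pq]].
have [_ dp _] := exact_g (subset_trans (subsetDl _ _) sA) gir (cD _ pA) (nr _ pA).
have [_ dq _] := exact_g (subset_trans (subsetDl _ _) sA) gir (cD _ qA) (nr _ qA).
have key x : incid x p -> incid x q.
  move=> ip.
  have pAq : p \in A :\ q by rewrite !inE pA andbT; apply: contra pq => /eqP ->.
  have h1 := deg_D1 x pA; have h2 := deg_D1 x qA.
  have h3 : 0 < deg (A :\ q) x.
    by rewrite /deg card_gt0; apply/set0Pn; exists p; rewrite inE pAq ip.
  move: h1 h2; rewrite ip /=.
  case: (dp x) => ->; case: (dq x) => E; rewrite E in h3 * => //.
    by case: (incid x q) => // ->.
  by case: (incid x q) => // ->.
have pE := subset_trans sA (subxx _).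
move/negP: pq; apply; apply/eqP; apply: (Ed_det (x := p.1) (y := p.2)).
- exact: (subsetP sA).
- exact: (subsetP sA).
- by rewrite /incid eqxx.
- by rewrite /incid eqxx orbT.
- by apply: key; rewrite /incid eqxx.
- by apply: key; rewrite /incid eqxx orbT.
- exact: Ed_sub_neq sA _ pA.
Qed.

End GraphPart.

End G1M.
Import G1M.

Module C1M.

Section Count.
Variables (V HT : finType) (L : V -> {set HT}) (m : nat).
Hypothesis HL : forall u, #|L u| = m.
Hypothesis m0 : 0 < m.
Implicit Types (A B : {set V * V}) (p q : V * V) (R : rel HT).

Definition CF := locked [set f : {ffun V -> HT} | [forall u, f u \in L u]].
Definition NS R A := locked [set f in CF | [forall p in A, R (f p.1) (f p.2)]].
Lemma inCF f : (f \in CF) = [forall u, f u \in L u].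
Proof. by rewrite /CF -lock inE. Qed.
Lemma inNS R A f : (f \in NS R A) = (f \in CF) && [forall p in A, R (f p.1) (f p.2)].
Proof. by rewrite /NS -lock inE. Qed.
Definition NR R A := #|NS R A|.
Definition upd (f : {ffun V -> HT}) x y := [ffun z => if z == x then y else f z].
Definition muniq R u v := forall z y y', z \in L u -> y \in L v -> y' \in L v ->
  R z y -> R z y' -> y = y'.
Definition mperf R u v := forall z, z \in L u -> exists2 y, y \in L v & R z y.

Lemma CF_card : #|CF| = m ^ #|V|.
Proof.
have := @card_family V (fun _ => HT) (fun u => mem (L u)).
move=> E.
have -> : #|CF| = #|(family (fun u => mem (L u)) : simpl_pred {dffun forall x : V, HT})|.
  apply: eq_card => f; rewrite inCF; apply/forallP/familyP => h u; exact: h.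
rewrite E cardE /image_mem; elim: (enum V) => //= a s ->; by rewrite HL expnS.
Qed.

Lemma other_neq x p : incid x p -> p.1 != p.2 -> other x p != x.
Proof.
case: p => a b; rewrite /incid /other /=.
case: (eqVneq a x) => [->|ax] /=; first by rewrite eq_sym.
by move=> /eqP ->.
Qed.

Lemma other_R R x p (f : V -> HT) : symmetric R -> incid x p ->
  R (f p.1) (f p.2) = R (f (other x p)) (f x).
Proof.
move=> Rs; rewrite /incid /other; case: eqP => [->|ne] /=; first by rewrite Rs.
by move=> /eqP ->.
Qed.

Lemma other_cases x p : incid x p ->
  (other x p, x) = (p.2, p.1) \/ (other x p, x) = (p.1, p.2).
Proof.
rewrite /incid /other; case: eqP => [->|ne] /=; first by left.
by move=> /eqP ->; right.
Qed.

Lemma deg1_only A p x : p \in A -> incid x p -> deg A x = 1 ->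
  forall q, q \in A -> incid x q -> q = p.
Proof.
move=> pA ip /eqP /cards1P [r Er] q qA iq.
have : p \in [set p in A | incid x p] by rewrite inE pA ip.
have : q \in [set p in A | incid x p] by rewrite inE qA iq.
by rewrite Er !inE => /eqP -> /eqP ->.
Qed.

Lemma upd_CF f x y : f \in CF -> y \in L x -> upd f x y \in CF.
Proof.
rewrite !inCF => /forallP hf yx; apply/forallP => z; rewrite ffunE.
by case: eqP => [->|]; last by move=> _; exact: hf.
Qed.

Lemma upd_NS R A f x y : (forall q, q \in A -> ~~ incid x q) -> f \in CF -> y \in L x ->
  (upd f x y \in NS R A) = (f \in NS R A).
Proof.
move=> nA fC yx; rewrite !inNS upd_CF // fC /=.
apply: eq_forallb_in => q qA; rewrite !ffunE.
have := nA q qA; rewrite /incid negb_or => /andP[n1 n2].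
by rewrite (negbTE n1) (negbTE n2).
Qed.

Lemma NS_CF R A f : f \in NS R A -> f \in CF.
Proof. by rewrite inNS => /andP[]. Qed.

Lemma fiber_le R A x y y' : (forall q, q \in A -> ~~ incid x q) -> y \in L x -> y' \in L x ->
  #|[set f in NS R A | f x == y]| <= #|[set f in NS R A | f x == y']|.
Proof.
move=> nA yx y'x.
rewrite -(@card_in_imset _ _ (fun f => upd f x y')); last first.
  move=> f g; rewrite !inE => /andP[_ /eqP fx] /andP[_ /eqP gx] E.
  apply/ffunP => z; have := congr1 (fun h : {ffun V -> HT} => h z) E; rewrite !ffunE.
  by case: eqP => [->|//]; rewrite fx gx.
apply: subset_leq_card; apply/subsetP => _ /imsetP[f + ->]; rewrite !inE => /andP[fN _].
by rewrite upd_NS // ?fN ?ffunE ?eqxx //; exact: NS_CF fN.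
Qed.

Lemma NS_sum R A x x0 : (forall q, q \in A -> ~~ incid x q) -> x0 \in L x ->
  #|NS R A| = m * #|[set f in NS R A | f x == x0]|.
Proof.
move=> nA x0x.
rewrite -sum1_card (partition_big (fun f : {ffun V -> HT} => f x) (mem (L x))) /=; last first.
  by move=> f /NS_CF; rewrite inCF => /forallP.
rewrite -(HL x) -sum_nat_const; apply: eq_bigr => y yx.
rewrite sum1dep_card; apply/eqP; rewrite eqn_leq.
by rewrite (fiber_le R nA yx x0x) (fiber_le R nA x0x yx).
Qed.


Lemma exists_in (x : V) : exists x0, x0 \in L x.
Proof. by apply/set0Pn; rewrite -card_gt0 HL. Qed.

Lemma NS_sub R A B f : B \subset A -> f \in NS R A -> f \in NS R B.
Proof.
move=> /subsetP sBA; rewrite !inNS => /andP[-> /forall_inP h] /=.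
by apply/forall_inP => q /sBA; exact: h.
Qed.

Lemma leaf_le R A p x : symmetric R -> p \in A -> incid x p -> deg A x = 1 ->
  p.1 != p.2 -> muniq R (other x p) x -> NR R A * m <= NR R (A :\ p).
Proof.
move=> Rs pA ip dx pn mu.
have nA q : q \in A :\ p -> ~~ incid x q.
  rewrite !inE => /andP[qp qA]; apply/negP => iq; move/negP: qp; apply; apply/eqP.
  exact: (deg1_only pA ip dx qA iq).
have [x0 x0x] := exists_in x.
rewrite /NR (NS_sum R nA x0x) mulnC leq_pmul2l //.
rewrite -(@card_in_imset _ _ (fun f => upd f x x0) (NS R A)); last first.
  move=> f g fN gN E.
  have fu : forall z, z != x -> f z = g z.
    move=> z zx; have := congr1 (fun h : {ffun V -> HT} => h z) E.
    by rewrite !ffunE (negbTE zx).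
  have un := other_neq ip pn.
  apply/ffunP => z; case: (eqVneq z x) => [->|]; last exact: fu.
  move: (fN) (gN); rewrite !inNS !inCF => /andP[/forallP fC /forall_inP fR] /andP[/forallP gC /forall_inP gR].
  apply: (mu (f (other x p))) => //.
  - by rewrite -(@other_R R x p f Rs ip); exact: fR.
  - by rewrite (fu _ un) -(@other_R R x p g Rs ip); exact: gR.
apply: subset_leq_card; apply/subsetP => _ /imsetP[f fN ->]; rewrite inE.
rewrite upd_NS ?ffunE ?eqxx ?andbT //; last exact: NS_CF fN.
by apply: NS_sub fN; exact: subsetDl.
Qed.

Lemma leaf_ge R A p x : symmetric R -> p \in A -> incid x p -> deg A x = 1 ->
  p.1 != p.2 -> mperf R (other x p) x -> NR R (A :\ p) <= NR R A * m.
Proof.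
move=> Rs pA ip dx pn mp.
have nA q : q \in A :\ p -> ~~ incid x q.
  rewrite !inE => /andP[qp qA]; apply/negP => iq; move/negP: qp; apply; apply/eqP.
  exact: (deg1_only pA ip dx qA iq).
have [x0 x0x] := exists_in x.
rewrite /NR (NS_sum R nA x0x) [X in _ <= X]mulnC leq_pmul2l //.
have un := other_neq ip pn.
apply: (leq_trans _ (leq_imset_card (fun f => upd f x x0) (NS R A))).
apply: subset_leq_card; apply/subsetP => g; rewrite inE => /andP[gN /eqP gx].
have gC := NS_CF gN.
have [y yx Ry] : exists2 y, y \in L x & R (g (other x p)) y.
  by apply: mp; move: gC; rewrite inCF => /forallP.
apply/imsetP; exists (upd g x y); last first.
  by apply/ffunP => z; rewrite !ffunE; case: eqP => [->|].
move: (gN); rewrite !inNS upd_CF //= => /andP[_ /forall_inP gR].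
apply/forall_inP => q qA; case: (eqVneq q p) => [->|qp].
  by rewrite (@other_R R x p (upd g x y) Rs ip) !ffunE eqxx (negbTE un).
have qA' : q \in A :\ p by rewrite !inE qp.
have := nA _ qA'; rewrite /incid negb_or => /andP[n1 n2].
by rewrite !ffunE (negbTE n1) (negbTE n2); exact: gR.
Qed.

Definition gpair R p := [/\ p.1 != p.2, muniq R p.1 p.2 & muniq R p.2 p.1].
Definition fpair R p := mperf R p.1 p.2 /\ mperf R p.2 p.1.

Lemma NR0 R : NR R set0 = m ^ #|V|.
Proof.
rewrite /NR -CF_card; apply: eq_card => f; rewrite inNS.
by case: (f \in CF) => //=; apply/forall_inP => q; rewrite inE.
Qed.

Lemma red_le R A : symmetric R -> red A -> (forall p, p \in A -> gpair R p) ->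
  NR R A * m ^ #|A| <= m ^ #|V|.
Proof.
move=> Rs; elim => [|B p x pB ip dx rB IH] hg; first by rewrite NR0 cards0 muln1.
have [pn m12 m21] := hg p pB.
have mu : muniq R (other x p) x by case: (other_cases ip) => [[-> ->]|[-> ->]].
have IH' := IH (fun q qB => hg q (subsetP (subsetDl B [set p]) q qB)).
rewrite (cardsD1 p B) pB add1n expnS mulnA.
apply: leq_trans IH'; rewrite leq_mul2r; apply/orP; right.
exact: (leaf_le Rs pB ip dx pn mu).
Qed.

Lemma red_eq R A : symmetric R -> red A ->
  (forall p, p \in A -> gpair R p /\ fpair R p) ->
  NR R A * m ^ #|A| = m ^ #|V|.
Proof.
move=> Rs; elim => [|B p x pB ip dx rB IH] hg; first by rewrite NR0 cards0 muln1.
have [[pn m12 m21] [f12 f21]] := hg p pB.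
have mu : muniq R (other x p) x by case: (other_cases ip) => [[-> ->]|[-> ->]].
have mp : mperf R (other x p) x by case: (other_cases ip) => [[-> ->]|[-> ->]].
have IH' := IH (fun q qB => hg q (subsetP (subsetDl B [set p]) q qB)).
rewrite (cardsD1 p B) pB add1n expnS mulnA -IH'; congr (_ * _).
by apply/eqP; rewrite eqn_leq (leaf_le Rs pB ip dx pn mu) (leaf_ge Rs pB ip dx pn mp).
Qed.

End Count.

End C1M.
Import C1M.

Module B1M.
Import Order.TTheory GRing.Theory Num.Theory.
Local Open Scope ring_scope.

Lemma alt_sum k b : \sum_(j < k.+1) (-1) ^+ j * ('C(b, j))%:Z =
  if b == 0%N then 1 else (-1) ^+ k * ('C(b.-1, k))%:Z.
Proof.
case: b => [|b] /=.
  rewrite big_ord_recl /= expr0 mul1r bin0 big1 ?addr0 // => j _.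
  by rewrite bin0n /= mulr0.
elim: k => [|k IH]; first by rewrite big_ord1 expr0 !mul1r !bin0.
rewrite big_ord_recr /= IH binS PoszD mulrDr exprS mulN1r.
by rewrite !mulNr addrCA subrr addr0.
Qed.

Lemma alt_sign k b : odd k ->
  \sum_(j < k.+1) (-1) ^+ j * ('C(b, j))%:Z <= (b == 0%N)%:Z.
Proof.
move=> ok; rewrite alt_sum; case: eqP => // _.
by rewrite -signr_odd ok expr1 mulN1r oppr_le0.
Qed.

Lemma alt_sign_even k b : ~~ odd k ->
  (b == 0%N)%:Z <= \sum_(j < k.+1) (-1) ^+ j * ('C(b, j))%:Z.
Proof.
move=> ok; rewrite alt_sum; case: eqP => // _.
by rewrite -signr_odd (negbTE ok) expr0 mul1r.
Qed.

Lemma sub_sum (T : finType) (B : {set T}) k :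
  \sum_(A : {set T} | (A \subset B) && (#|A| <= k)%N) (-1) ^+ #|A| =
  \sum_(j < k.+1) (-1) ^+ j * ('C(#|B|, j))%:Z :> int.
Proof.
rewrite (partition_big (fun A : {set T} => (inord #|A| : 'I_k.+1)) xpredT) //=.
apply: eq_bigr => j _.
rewrite -cards_draws.
rewrite (eq_bigl (fun A : {set T} => A \in [set A : {set T} | A \subset B & #|A| == j])); last first.
  move=> A; rewrite inE; apply/andP/andP => [[/andP[-> le] /eqP E]|[-> /eqP E]].
    by split => //; rewrite -E inordK.
  split; last by apply/eqP/val_inj; rewrite /= inordK E // ltn_ord.
  by rewrite E -ltnS ltn_ord.
rewrite (eq_bigr (fun _ => (-1) ^+ j)); last first.
  by move=> A; rewrite inE => /andP[_ /eqP ->].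
by rewrite sumr_const -mulr_natr natz.
Qed.

Lemma Posz_sum (I : finType) (P : pred I) (F : I -> nat) :
  ((\sum_(i | P i) F i)%N)%:Z = \sum_(i | P i) (F i)%:Z.
Proof. by rewrite -natz natr_sum; apply: eq_bigr => i _; rewrite natz. Qed.

Section Bonf.
Variables (V HT : finType) (e : rel V) (L : V -> {set HT}).
Implicit Types (A : {set V * V}) (R : rel HT).

Definition Bset R (f : {ffun V -> HT}) := [set p in Ed e | R (f p.1) (f p.2)].
Definition Good R := #|[set f in CF L | Bset R f == set0]|.
Definition Tk R k : int := \sum_(A in powerset (Ed e) | (#|A| <= k)%N)
   (-1) ^+ #|A| * (NR L R A)%:Z.

Lemma NR_sum R A : A \subset Ed e ->
  NR L R A = (\sum_(f in CF L) (A \subset Bset R f))%N.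
Proof.
move=> sA; rewrite /NR -sum1_card [RHS]big_mkcond /= [LHS]big_mkcond /=.
apply: eq_bigr => f _; rewrite inNS; case: (f \in CF L) => //=.
case: (boolP [forall p in A, _]) => h; case: (boolP (A \subset _)) => h' //.
- case/negP: h'; apply/subsetP => p pA; rewrite inE (subsetP sA _ pA) /=.
  exact: (forall_inP h).
- case/negP: h; apply/forall_inP => p /(subsetP h'); rewrite inE => /andP[].
  by [].
Qed.

Lemma Tk_eq R k : Tk R k =
  \sum_(f in CF L) \sum_(j < k.+1) (-1) ^+ j * ('C(#|Bset R f|, j))%:Z.
Proof.
rewrite /Tk.
rewrite (eq_bigr (fun A => \sum_(f in CF L) (-1) ^+ #|A| * (A \subset Bset R f)%:Z)); last first.
  move=> A; rewrite inE => /andP[sA _]; rewrite NR_sum // Posz_sum big_distrr /=.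
  done.
rewrite exchange_big /=; apply: eq_bigr => f _; rewrite -sub_sum.
rewrite big_mkcond [RHS]big_mkcond /=; apply: eq_bigr => A _.
rewrite inE; case: (boolP (A \subset Bset R f)) => h /=.
  have -> : A \subset Ed e by apply: subset_trans h _; apply/subsetP => p; rewrite inE => /andP[].
  by case: (#|A| <= k)%N => //=; rewrite mulr1.
by case: (_ && _) => //; rewrite mulr0.
Qed.

Lemma Good_eq R : (Good R)%:Z = \sum_(f in CF L) (#|Bset R f| == 0%N)%:Z.
Proof.
rewrite /Good -sum1_card Posz_sum big_mkcond [RHS]big_mkcond /=.
by apply: eq_bigr => f _; rewrite inE cards_eq0; case: (_ \in _); case: (_ == _).
Qed.

Lemma bonf_odd R k : odd k -> Tk R k <= (Good R)%:Z.
Proof.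
by move=> ok; rewrite Tk_eq Good_eq; apply: ler_sum => f _; exact: alt_sign.
Qed.

Lemma bonf_even R k : ~~ odd k -> (Good R)%:Z <= Tk R k.
Proof.
by move=> ok; rewrite Tk_eq Good_eq; apply: ler_sum => f _; exact: alt_sign_even.
Qed.

End Bonf.

End B1M.
Import B1M.

Module M1M.
Import Order.TTheory GRing.Theory Num.Theory.

Section Compare.
Variables (V : finType) (e : rel V).
Hypothesis esym : symmetric e.
Hypothesis eirr : irreflexive e.
Variable g : nat.
Hypothesis godd : odd g.
Hypothesis g3 : (2 < g)%N.
Hypothesis gir : forall c, is_cycle e c -> (g <= size c)%N.
Variable m : nat.
Hypothesis m0 : (0 < m)%N.

Definition SN (HT : finType) (L : V -> {set HT}) (R : rel HT) j :=
  (\sum_(A in powerset (Ed e) | #|A| == j) NR L R A)%N.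

Lemma Tk_S (HT : finType) (L : V -> {set HT}) (R : rel HT) k :
  Tk e L R k.+1 = (Tk e L R k + (-1) ^+ k.+1 * (SN L R k.+1)%:Z)%R.
Proof.
rewrite /Tk (bigID (fun A : {set V * V} => #|A| == k.+1)) /=.
rewrite addrC; congr (_ + _)%R.
  apply: eq_bigl => A; rewrite -andbA; case: (A \in _) => //=.
  by rewrite andbC -ltn_neqAle ltnS.
rewrite /SN Posz_sum big_distrr /=; apply: congr_big => // A.
  by rewrite -andbA; case: (A \in _) => //=; case: eqP => [->|]; rewrite ?leqnn ?andbF.
by move=> /andP[_ /eqP ->].
Qed.


Lemma NR_sub (HT : finType) (L : V -> {set HT}) (R : rel HT) (A B : {set V * V}) :
  B \subset A -> (NR L R A <= NR L R B)%N.
Proof.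
move=> sBA; apply: subset_leq_card; apply/subsetP => f; exact: NS_sub.
Qed.

Lemma mpos n : (0 < m ^ n)%N. Proof. by rewrite expn_gt0 m0. Qed.

Section Two.
Variables (HT1 HT2 : finType) (L1 : V -> {set HT1}) (L2 : V -> {set HT2}).
Variables (h1 : rel HT1) (h2 : rel HT2).
Hypothesis HL1 : forall u, #|L1 u| = m.
Hypothesis HL2 : forall u, #|L2 u| = m.
Hypothesis h1s : symmetric h1.
Hypothesis h2s : symmetric h2.
Hypothesis h1f : forall p, p \in Ed e -> gpair L1 h1 p /\ fpair L1 h1 p.
Hypothesis h2f : forall p, p \in Ed e -> gpair L2 h2 p /\ fpair L2 h2 p.
Hypothesis HXc : forall A : {set V * V}, A \subset Ed e ->
  (forall x, deg A x = 0 \/ deg A x = 2) -> (#|touched A| <= g)%N ->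
  (m ^ #|V| <= NR L1 h1 A * m ^ g.-1)%N.

Lemma eq_small (A : {set V * V}) : A \subset Ed e -> (#|A| < g)%N ->
  NR L1 h1 A = NR L2 h2 A.
Proof.
move=> sA lt; have rA := small_red esym eirr sA gir lt.
have E1 := red_eq HL1 m0 h1s rA (fun p pA => h1f (subsetP sA p pA)).
have E2 := red_eq HL2 m0 h2s rA (fun p pA => h2f (subsetP sA p pA)).
apply/eqP; rewrite -(eqn_pmul2r (mpos #|A|)) E1 E2; exact: eqxx.
Qed.

Lemma le_g (A : {set V * V}) : A \subset Ed e -> #|A| = g ->
  (NR L2 h2 A <= NR L1 h1 A)%N.
Proof.
move=> sA cA; case: (pselect (red A)) => rA.
  have E1 := red_eq HL1 m0 h1s rA (fun p pA => h1f (subsetP sA p pA)).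
  have E2 := red_eq HL2 m0 h2s rA (fun p pA => h2f (subsetP sA p pA)).
  by rewrite -(leq_pmul2r (mpos #|A|)) E1 E2; exact: leqnn.
have [_ dA tA] := exact_g esym eirr sA gir cA rA.
have := HXc sA dA tA => H1.
have : (0 < #|A|)%N by rewrite cA; exact: ltnW (ltnW g3).
rewrite card_gt0 => /set0Pn[p pA].
have sA' : A :\ p \subset Ed e by apply: subset_trans sA; exact: subsetDl.
have cA' : #|A :\ p| = g.-1 by move: cA; rewrite (cardsD1 p) pA add1n => <-.
have rA' : red (A :\ p) by apply: (small_red esym eirr sA' gir); rewrite cA' prednK // ltnW // ltnW.
have H2 := red_le HL2 m0 h2s rA' (fun q qA => (h2f (subsetP sA' q qA)).1).
rewrite cA' in H2.
have H3 := NR_sub L2 h2 (subsetDl A [set p]).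
rewrite -(leq_pmul2r (mpos g.-1)).
apply: leq_trans H1; apply: leq_trans H2; by rewrite leq_mul2r H3 orbT.
Qed.

Lemma le_g1 (A : {set V * V}) : A \subset Ed e -> #|A| = g.+1 ->
  (NR L1 h1 A * m ^ g <= m ^ #|V|)%N.
Proof.
move=> sA cA.
have [p pA rA'] := g1_red esym eirr (ltnW (ltnW g3)) sA gir cA.
have sA' : A :\ p \subset Ed e by apply: subset_trans sA; exact: subsetDl.
have cA' : #|A :\ p| = g by move: cA; rewrite (cardsD1 p) pA add1n => -[].
have H2 := red_le HL1 m0 h1s rA' (fun q qA => (h1f (subsetP sA' q qA)).1).
rewrite cA' in H2; apply: leq_trans H2; rewrite leq_mul2r.
by rewrite (NR_sub L1 h1 (subsetDl A [set p])) orbT.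
Qed.


Lemma compare : (Good e L1 h1 <= Good e L2 h2 + SN L1 h1 g.+1)%N.
Proof.
have o1 := @bonf_even V HT1 e L1 h1 g.+1; rewrite /= godd /= in o1.
have o2 := @bonf_odd V HT2 e L2 h2 g godd.
have o1' := o1 isT.
have [g' Eg] : exists g', g = g'.+1 by exists g.-1; rewrite prednK // ltnW // ltnW.
rewrite Eg !Tk_S in o1' o2.
have ET : Tk e L1 h1 g' = Tk e L2 h2 g'.
  rewrite /Tk; apply: eq_bigr => A; rewrite inE => /andP[sA lA].
  by rewrite eq_small // Eg ltnS.
have ES : (SN L2 h2 g'.+1 <= SN L1 h1 g'.+1)%N.
  by apply: leq_sum => A; rewrite inE => /andP[sA /eqP cA]; apply: le_g; rewrite // Eg.
have godd' : odd g'.+1 by rewrite -Eg.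
have sg1 : ((-1) ^+ g'.+2 = 1 :> int)%R.
  by rewrite -signr_odd; move: godd'; rewrite /= => /negbTE ->.
have sg2 : ((-1) ^+ g'.+1 = -1 :> int)%R.
  by rewrite -signr_odd godd' expr1.
rewrite sg1 sg2 mul1r mulN1r ET in o1'; rewrite sg2 mulN1r in o2.
rewrite Eg -lez_nat PoszD.
apply: (le_trans o1'); rewrite lerD2r; apply: (le_trans _ o2).
by rewrite lerD2l lerN2 lez_nat.
Qed.


Lemma SN_bound : (SN L1 h1 g.+1 * m ^ g <=
  #|[set A in powerset (Ed e) | #|A| == g.+1]| * m ^ #|V|)%N.
Proof.
rewrite /SN big_distrl /=.
rewrite (eq_bigl (mem [set A in powerset (Ed e) | #|A| == g.+1])); last by move=> A; rewrite !inE.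
rewrite -sum_nat_const; apply: leq_sum => A; rewrite !inE => /andP[sA /eqP cA].
exact: le_g1.
Qed.

End Two.
End Compare.

End M1M.
Import M1M.

Module P1M.

Section CoverFacts.
Variables (V : finType) (e : rel V).
Hypothesis esym : symmetric e.
Hypothesis eirr : irreflexive e.

Lemma e_Ed u v : e u v -> ((u, v) \in Ed e) || ((v, u) \in Ed e).
Proof.
move=> euv; rewrite !inE /= euv esym euv /= /ltv.
have : enum_rank u != enum_rank v.
  apply: contraTneq euv => /enum_rank_inj ->; by rewrite eirr.
by rewrite neq_ltn.
Qed.

Variables (HT : finType) (h : rel HT) (L : V -> {set HT}) (m : nat).
Hypothesis cov : is_mfold_cover e m h L.

Lemma L_uniq x u v : x \in L u -> x \in L v -> u = v.
Proof.
case: cov => _ [_ [_ [disj _]]] xu xv; apply/eqP; apply: contraT => uv.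
by rewrite (disjointFr (disj _ _ uv) xu) in xv.
Qed.

Lemma CF_inj f : f \in CF L -> injective f.
Proof.
rewrite inCF => /forallP fC u v E; apply: (@L_uniq (f u)); first exact: fC.
by rewrite E; exact: fC.
Qed.

Definition img (f : {ffun V -> HT}) := [set f u | u : V].

Lemma good_nonadj f u v : f \in CF L -> Bset e h f == set0 -> ~~ h (f u) (f v).
Proof.
case: cov => hs [hi [_ [_ [_ [adj _]]]]].
move=> fC /eqP B0; case: (eqVneq u v) => [->|uv]; first by rewrite hi.
apply/negP => huv.
have := fC; rewrite inCF => /forallP fL.
case: (adj u v (f u) (f v) (fL u) (fL v) huv) => [E|euv]; first by rewrite E eqxx in uv.
case/orP: (e_Ed euv) => pE.
  have : (u, v) \in Bset e h f by rewrite inE pE /= huv.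
  by rewrite B0 inE.
have : (v, u) \in Bset e h f by rewrite inE pE /= hs huv.
by rewrite B0 inE.
Qed.

Lemma ncc : num_cover_colorings V h = Good e L h.
Proof.
case: cov => hs [hi [part [disj [cliq [adj [mat cardL]]]]]].
rewrite /num_cover_colorings /Good.
set GS := [set f in CF L | Bset e h f == set0].
set IS := [set I : {set HT} | independent h I && (#|I| == #|V|)].
have imginj : {in GS &, injective img}.
  move=> f g; rewrite !inE => /andP[fC _] /andP[gC _] E; apply/ffunP => u.
  have : f u \in img g by rewrite -E; apply/imsetP; exists u.
  case/imsetP => v _ fg; rewrite fg.
  have := fC; rewrite inCF => /forallP fL; have := gC; rewrite inCF => /forallP gL.
  by have := @L_uniq (f u) u v (fL u); rewrite fg => /(_ (gL v)) ->.
rewrite -(card_in_imset imginj); apply: eq_card => I.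
rewrite inE; apply/andP/imsetP.
- case=> /forallP indI /eqP cI.
  have [own ownP] := @fin_all_exists HT (fun _ => V) (fun x u => x \in L u) part.
  have ex u : exists x, (x \in I) && (x \in L u).
    apply/existsP; apply: contraT; rewrite negb_exists => /forallP nx.
    have : (#|I| <= #|V|.-1)%N.
      rewrite -sum1_card (partition_big own xpredT) //=.
      rewrite (bigD1 u) //= big1 ?add0n.
        apply: (@leq_trans (\sum_(v | v != u) 1)%N); last by rewrite sum1_card cardC1.
        apply: leq_sum => v _.
        rewrite sum1dep_card; apply/card_le1P => x; rewrite !inE => /andP[xI /eqP ox] y.
        apply/idP/idP => [|/eqP ->]; rewrite !inE; last by rewrite xI ox eqxx.
        case/andP=> yI /eqP oy.
        apply: contraT => yx; have := indI x; rewrite xI /= => /forall_inP/(_ y yI).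
        have xv : x \in L v by rewrite -ox ownP.
        have yv : y \in L v by rewrite -oy ownP.
        by move=> /negP nh; exfalso; apply: nh; apply: cliq xv yv _; rewrite eq_sym.
      move=> x /andP[xI /eqP ox]; have := nx x; rewrite xI /= -ox ownP //.
    rewrite cI; have : (0 < #|V|)%N by apply/card_gt0P; exists u.
    by case: #|V| => [//|n] /= _; rewrite ltnn.
  have [F FP] := @fin_all_exists V (fun _ => HT) (fun u x => (x \in I) && (x \in L u)) ex.
  pose f := [ffun u => F u].
  have fC : f \in CF L by rewrite inCF; apply/forallP => u; rewrite ffunE; case/andP: (FP u).
  have fI : img f \subset I by apply/subsetP => _ /imsetP[u _ ->]; rewrite ffunE; case/andP: (FP u).
  have cf : #|img f| = #|V| by rewrite card_imset //; exact: CF_inj.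
  exists f.
    rewrite inE fC /=; apply/eqP/setP => p; rewrite !inE; apply/negP => /andP[_ hp].
    have := indI (f p.1); rewrite (subsetP fI) ?imset_f // => /forall_inP/(_ (f p.2)).
    by rewrite (subsetP fI) ?imset_f // hp => /(_ isT).
  by apply/eqP; rewrite eq_sym eqEcard fI cf cI leqnn.
- case=> f; rewrite inE => /andP[fC B0] ->; split; last first.
    by rewrite card_imset //; exact: CF_inj.
  apply/forallP => x; apply/implyP => /imsetP[u _ ->]; apply/forall_inP => _ /imsetP[v _ ->].
  exact: good_nonadj.
Qed.

End CoverFacts.

Section Star.
Variable V : finType.
Implicit Types (S : {set V}).

Definition star (t0 : V) (S : {set V}) : {set V * V} := [set (t0, t) | t in S].

Lemma star_card t0 S : #|star t0 S| = #|S|.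
Proof. by rewrite card_imset // => a b [->]. Qed.

Lemma red_star t0 S : t0 \notin S -> red (star t0 S).
Proof.
have [n] := ubnP #|S|; elim: n S => // n IH S ltS nS.
case: (set_0Vmem S) => [->|[t tS]].
  by rewrite /star imset0; exact: red0.
have pS : (t0, t) \in star t0 S by apply/imsetP; exists t.
have t0t : t0 != t by apply: contraNneq nS => ->.
apply: (redS (x := t) pS); first by rewrite /incid eqxx orbT.
  apply/eqP/cards1P; exists (t0, t); apply/setP => q; rewrite !inE.
  apply/andP/eqP => [[/imsetP[t' t'S ->]]|->]; last by rewrite pS /incid eqxx orbT.
  rewrite /incid /= (negbTE t0t) /= => /eqP -> //.
have -> : star t0 S :\ (t0, t) = star t0 (S :\ t).
  apply/setP => q; rewrite !inE; apply/andP/imsetP.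
    case=> qp /imsetP[t' t'S E]; exists t' => //; rewrite !inE t'S andbT.
    by apply: contraNneq qp => E'; rewrite E E'.
  case=> t'; rewrite !inE => /andP[t't t'S] ->; split; last by apply/imsetP; exists t'.
  by apply: contraNneq t't => -[->].
apply: IH; last by rewrite !inE negb_and nS orbT.
by move: ltS; rewrite (cardsD1 t S) tS add1n ltnS.
Qed.

End Star.

Section Identity.
Variables (V : finType) (e : rel V).
Hypothesis esym : symmetric e.
Hypothesis eirr : irreflexive e.
Variable m : nat.
Hypothesis m0 : (0 < m)%N.

Definition L0 (u : V) : {set V * 'I_m} := [set x | x.1 == u].
Definition h0 : rel (V * 'I_m) :=
  fun x y => ((x.1 == y.1) && (x.2 != y.2)) || (e x.1 y.1 && (x.2 == y.2)).
Definition R0 : rel (V * 'I_m) := fun x y => x.2 == y.2.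

Lemma HL0 u : #|L0 u| = m.
Proof.
have -> : L0 u = [set (u, i) | i : 'I_m].
  apply/setP => x; rewrite inE; apply/eqP/imsetP => [<-|[i _ ->]] //.
  by exists x.2 => //; case: x.
by rewrite card_imset ?card_ord // => a b [].
Qed.


Lemma L0P u x : (x \in L0 u) = (x.1 == u).
Proof. by rewrite inE. Qed.

Lemma h0E u v x y : x \in L0 u -> y \in L0 v -> u != v -> h0 x y = e u v && (x.2 == y.2).
Proof.
rewrite !L0P => /eqP xu /eqP yv uv; rewrite /h0 xu yv (negbTE uv) //.
Qed.

Lemma pair_eq (x y : V * 'I_m) : x.1 = y.1 -> x.2 = y.2 -> x = y.
Proof. by case: x; case: y => /= ? ? ? ? -> ->. Qed.

Lemma h0_sym : symmetric h0.
Proof. by move=> x y; rewrite /h0 esym (eq_sym x.1) !(eq_sym x.2). Qed.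

Lemma id_cover : is_mfold_cover e m h0 L0.
Proof.
split; first exact: h0_sym.
split; first by move=> x; rewrite /h0 !eqxx eirr.
split; first by move=> x; exists x.1; rewrite L0P.
split.
  move=> u v uv; rewrite -setI_eq0; apply/eqP/setP => x; rewrite !inE.
  by apply/negP => /andP[/eqP -> /eqP E]; rewrite E eqxx in uv.
split.
  move=> u x y; rewrite !L0P => /eqP xu /eqP yu xy; rewrite /h0 xu yu eqxx /=.
  rewrite eirr orbF; apply: contra xy => /eqP E; apply/eqP; apply: pair_eq; rewrite ?xu ?yu ?E //.
split.
  move=> u v x y; rewrite !L0P => /eqP xu /eqP yv; rewrite /h0 xu yv.
  by case/orP => [/andP[/eqP -> _]|/andP[-> _]]; [left|right].
split; last exact: HL0.
move=> u v euv; have uv : u != v by apply: contraTneq euv => ->; rewrite eirr.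
split.
  move=> x y y' xu yv y'v; rewrite (h0E xu yv uv) (h0E xu y'v uv) euv /=.
  move=> /eqP E1 /eqP E2; apply: pair_eq; last by rewrite -E1 -E2.
  by move: yv y'v; rewrite !L0P => /eqP -> /eqP ->.
move=> x x' y xu x'u yv; rewrite (h0E xu yv uv) (h0E x'u yv uv) euv /=.
move=> /eqP E1 /eqP E2; apply: pair_eq; last by rewrite E1 E2.
by move: xu x'u; rewrite !L0P => /eqP -> /eqP ->.
Qed.

Lemma id_full p : p \in Ed e -> gpair L0 h0 p /\ fpair L0 h0 p.
Proof.
rewrite inE => /andP[ep _].
have pn : p.1 != p.2 by apply: contraTneq ep => ->; rewrite eirr.
have [_ [_ [_ [_ [_ [_ [mat _]]]]]]] := id_cover.
have [m1 m2] := mat _ _ ep.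
have [m3 m4] := mat _ _ (etrans (esym _ _) ep).
split; first by split; [exact: pn | exact: m1 | exact: m3].
split.
- move=> z zu; exists (p.2, z.2); first by rewrite L0P.
  have yv : (p.2, z.2) \in L0 p.2 by rewrite L0P.
  by rewrite (h0E zu yv pn) ep /=.
- move=> z zu; exists (p.1, z.2); first by rewrite L0P.
  have yv : (p.1, z.2) \in L0 p.1 by rewrite L0P.
  rewrite eq_sym in pn.
  by rewrite (h0E zu yv pn) esym ep /=.
Qed.

Lemma id_good : Good e L0 h0 = chrom e m.
Proof.
rewrite /Good /chrom.
pose psi (col : {ffun V -> 'I_m}) : {ffun V -> V * 'I_m} := [ffun u => (u, col u)].
have pinj : injective psi.
  move=> c c' E; apply/ffunP => u; have := congr1 (fun f : {ffun V -> V * 'I_m} => f u) E.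
  by rewrite !ffunE => -[].
rewrite -(card_imset _ pinj); apply: eq_card => f; rewrite inE.
apply/andP/imsetP.
- case=> fC B0; exists [ffun u => (f u).2].
    rewrite inE; apply/forallP => u; apply/forallP => v; apply/implyP => euv.
    have := good_nonadj esym eirr id_cover u v fC B0.
    have fL : forall w, f w \in L0 w by move: fC; rewrite inCF => /forallP.
    have uv : u != v by apply: contraTneq euv => ->; rewrite eirr.
    by rewrite (h0E (fL u) (fL v) uv) euv !ffunE.
  apply/ffunP => u; rewrite !ffunE; move: fC; rewrite inCF => /forallP/(_ u).
  by rewrite L0P; case: (f u) => a b /= /eqP ->.
- case=> col; rewrite inE => /forallP pc ->; split.
    by rewrite inCF; apply/forallP => u; rewrite ffunE L0P.
  apply/eqP/setP => p; rewrite !inE; apply/negP => /andP[/andP[ep _]].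
  have pn : p.1 != p.2 by apply: contraTneq ep => ->; rewrite eirr.
  have y1 : (p.1, col p.1) \in L0 p.1 by rewrite L0P.
  have y2 : (p.2, col p.2) \in L0 p.2 by rewrite L0P.
  rewrite !ffunE (h0E y1 y2 pn) ep /=.
  by have := pc p.1 => /forallP/(_ p.2); rewrite ep /= => /negbTE ->.
Qed.


Lemma R0_sym : symmetric R0.
Proof. by move=> x y; rewrite /R0 eq_sym. Qed.

Lemma R0_pair (u v : V) : gpair L0 R0 (u, v) /\ fpair L0 R0 (u, v) \/ u = v.
Proof.
case: (eqVneq u v) => [->|uv]; [by right | left].
have mu a b : muniq L0 R0 a b.
  move=> z y y'; rewrite !L0P => _ /eqP y1 /eqP y1' /eqP z1 /eqP z2.
  by apply: pair_eq; rewrite ?y1 ?y1' // -z1 -z2.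
have mp a b : mperf L0 R0 a b.
  by move=> z _; exists (b, z.2); rewrite ?L0P //= /R0 eqxx.
by split; [split | split].
Qed.

Lemma touched_incid (A : {set V * V}) p x : p \in A -> incid x p -> x \in touched A.
Proof.
move=> pA ip; rewrite inE /deg card_gt0; apply/set0Pn; exists p; rewrite inE pA ip.
by [].
Qed.

Lemma id_cyc g (A : {set V * V}) : A \subset Ed e -> (#|touched A| <= g)%N -> (0 < g)%N ->
  (m ^ #|V| <= NR L0 h0 A * m ^ g.-1)%N.
Proof.
move=> sA tA g0.
case: (set_0Vmem (touched A)) => [T0 | [t0 t0T]].
  have -> : A = set0.
    apply/setP => p; rewrite inE; apply/negP => pA.
    have h1 : p.1 \in touched A by apply: touched_incid pA _; rewrite /incid eqxx.
    by rewrite T0 inE in h1.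
  by rewrite (NR0 (@HL0)) // leq_pmulr // expn_gt0 m0.
set S := touched A :\ t0.
have nS : t0 \notin S by rewrite !inE eqxx.
have rS := red_star nS.
have hyp : forall q, q \in star t0 S -> gpair L0 R0 q /\ fpair L0 R0 q.
  move=> q /imsetP[t tS ->]; case: (R0_pair t0 t) => // E'.
  by move: nS; rewrite E' tS.
have E := red_eq (@HL0) m0 R0_sym rS hyp.
have sub : (NR L0 R0 (star t0 S) <= NR L0 h0 A)%N.
  apply: subset_leq_card; apply/subsetP => f; rewrite !inNS => /andP[fC /forall_inP fR].
  rewrite fC /=; apply/forall_inP => p pA.
  have fL : forall w, f w \in L0 w by move: fC; rewrite inCF => /forallP.
  have col t : t \in touched A -> (f t).2 = (f t0).2.
    case: (eqVneq t t0) => [->//|tt0] tT.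
    have : (t0, t) \in star t0 S by apply/imsetP; exists t => //; rewrite /S in_setD1 tt0 tT.
    by move/fR; rewrite /R0 /= => /eqP.
  have pE := subsetP sA _ pA; move: (pE); rewrite inE => /andP[ep _].
  have pn : p.1 != p.2 by apply: contraTneq ep => ->; rewrite eirr.
  rewrite (h0E (fL p.1) (fL p.2) pn) ep /= (col p.1) ?(col p.2) //.
    by apply: touched_incid pA _; rewrite /incid eqxx orbT.
  by apply: touched_incid pA _; rewrite /incid eqxx.
have cS : (#|S| <= g.-1)%N.
  by move: tA; rewrite (cardsD1 t0) t0T add1n => tA; rewrite -ltnS prednK.
rewrite -E; apply: (leq_mul sub); apply: leq_pexp2l => //.
exact: (leq_trans (eq_leq (star_card t0 S)) cS).
Qed.

End Identity.

End P1M.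
Import P1M.

Module X1M.

Section Ext.
Variables (V : finType) (e : rel V).
Hypothesis esym : symmetric e.
Hypothesis eirr : irreflexive e.
Variables (HT : finType) (h : rel HT) (L : V -> {set HT}) (m : nat).
Hypothesis cov : is_mfold_cover e m h L.

Definition Pset (b : V) := [set x | [exists y in L b, h x y]].
Definition Mt a b := L a :&: Pset b.
Definition Un a b := L a :\: Pset b.
Definition ext a b x y := [&& x \in Un a b, y \in Un b a &
  index x (enum (Un a b)) == index y (enum (Un b a))].
Definition h' : rel HT := fun x y => h x y || [exists a, exists b, e a b && ext a b x y].

Lemma hs : symmetric h. Proof. by case: cov. Qed.

Lemma h'_sym : symmetric h'.
Proof.
move=> x y; rewrite /h' hs; congr (_ || _).
apply/existsP/existsP => -[a /existsP[b /andP[eab E]]]; exists b; apply/existsP; exists a.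
all: rewrite esym eab /=; move: E; rewrite /ext => /and3P[-> -> /eqP ->]; by rewrite eqxx.
Qed.

Lemma h_h' x y : h x y -> h' x y.
Proof. by rewrite /h' => ->. Qed.

Lemma mat1 a b : e a b -> forall x y y', x \in L a -> y \in L b -> y' \in L b ->
  h x y -> h x y' -> y = y'.
Proof. by case: cov => _ [_ [_ [_ [_ [_ [mat _]]]]]] eab; case: (mat a b eab). Qed.

Lemma mat2 a b : e a b -> forall x x' y, x \in L a -> x' \in L a -> y \in L b ->
  h x y -> h x' y -> x = x'.
Proof. by case: cov => _ [_ [_ [_ [_ [_ [mat _]]]]]] eab; case: (mat a b eab). Qed.

Lemma HL u : #|L u| = m.
Proof. by case: cov => _ [_ [_ [_ [_ [_ [_ c]]]]]]. Qed.

Lemma Mt_le a b : e a b -> #|Mt a b| <= #|Mt b a|.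
Proof.
move=> eab.
pose pt x := odflt x [pick y in L b | h x y].
have ptP x : x \in Mt a b -> (pt x \in L b) && h x (pt x).
  rewrite !inE => /andP[_ /exists_inP[y yb hxy]]; rewrite /pt.
  by case: pickP => [z /andP[-> ->]|/(_ y)] //=; rewrite yb hxy.
rewrite -(@card_in_imset _ _ pt); last first.
  move=> x x' xM x'M E; have := ptP _ xM; have := ptP _ x'M; rewrite -E.
  move=> /andP[_ h2] /andP[yb h1]; move: xM x'M; rewrite !inE => /andP[xa _] /andP[x'a _].
  exact: (mat2 eab xa x'a yb h1 h2).
apply: subset_leq_card; apply/subsetP => _ /imsetP[x xM ->].
have := ptP _ xM => /andP[yb hxy]; move: xM; rewrite !inE => /andP[xa _].
rewrite yb /=; apply/exists_inP; exists x => //; by rewrite hs.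
Qed.

Lemma Un_card a b : e a b -> #|Un a b| = #|Un b a|.
Proof.
move=> eab.
have E1 := cardsID (Pset b) (L a); have E2 := cardsID (Pset a) (L b).
have M : #|Mt a b| = #|Mt b a|.
  by apply/eqP; rewrite eqn_leq Mt_le // Mt_le // esym.
rewrite !HL in E1 E2; rewrite /Un; rewrite /Mt in M; lia.
Qed.

Lemma ext_ab a b a' b' x y : x \in L a -> y \in L b -> ext a' b' x y -> a' = a /\ b' = b.
Proof.
move=> xa yb /and3P[xU yU _]; move: xU yU; rewrite !inE => /andP[_ xa'] /andP[_ yb'].
by split; [apply: (L_uniq cov xa' xa) | apply: (L_uniq cov yb' yb)].
Qed.

Lemma h'_uniq a b : e a b -> muniq L h' a b.
Proof.
move=> eab z y y' za yb y'b.
rewrite /h' => /orP[hy|/existsP[a1 /existsP[b1 /andP[_ E1]]]] /orP[hy'|/existsP[a2 /existsP[b2 /andP[_ E2]]]].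
- exact: (mat1 eab za yb y'b hy hy').
- case: (ext_ab za y'b E2) => ? ?; subst; case/and3P: E2; rewrite !inE => /andP[/exists_inP nz _] _ _.
  by exfalso; apply: nz; exists y.
- case: (ext_ab za yb E1) => ? ?; subst; case/and3P: E1; rewrite !inE => /andP[/exists_inP nz _] _ _.
  by exfalso; apply: nz; exists y'.
- case: (ext_ab za yb E1) => ? ?; subst; case: (ext_ab za y'b E2) => ? ?; subst.
  case/and3P: E1 => _ yU /eqP i1; case/and3P: E2 => _ y'U /eqP i2.
  rewrite -(nth_index y (_ : y \in enum (Un b a))) ?mem_enum //.
  rewrite -(nth_index y (_ : y' \in enum (Un b a))) ?mem_enum //.
  by rewrite -i1 -i2.
Qed.

Lemma h'_perf a b : e a b -> mperf L h' a b.
Proof.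
move=> eab z za.
case: (boolP [exists y in L b, h z y]) => [/exists_inP[y yb hzy]|nz].
  by exists y => //; exact: h_h'.
have zU : z \in Un a b by rewrite !inE nz za.
set i := index z (enum (Un a b)).
have ilt : i < size (enum (Un b a)).
  by rewrite -cardE -(Un_card eab) cardE index_mem mem_enum.
set y := nth z (enum (Un b a)) i.
have yU : y \in Un b a by rewrite -mem_enum mem_nth.
exists y; first by move: yU; rewrite !inE => /andP[].
apply/orP; right; apply/existsP; exists a; apply/existsP; exists b.
by rewrite eab /ext zU yU /= index_uniq ?enum_uniq // eqxx.
Qed.

Lemma h'_full p : p \in Ed e -> gpair L h' p /\ fpair L h' p.
Proof.
rewrite inE => /andP[ep _].
have pn : p.1 != p.2 by apply: contraTneq ep => ->; rewrite eirr.
have ep' : e p.2 p.1 by rewrite esym.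
by split; [split | split]; rewrite ?pn //; [exact: h'_uniq | exact: h'_uniq | exact: h'_perf | exact: h'_perf].
Qed.

Lemma Good_h' : Good e L h' <= Good e L h.
Proof.
apply: subset_leq_card; apply/subsetP => f; rewrite !inE => /andP[-> /eqP B0] /=.
apply/eqP/setP => p; rewrite !inE; apply/negP => /andP[pE hp].
have : p \in Bset e h' f by rewrite !inE pE /= h_h'.
by rewrite B0 inE.
Qed.

End Ext.

End X1M.
Import X1M.

Module F1M.

Section Final.
Variables (V : finType) (e : rel V).
Hypothesis esym : symmetric e.
Hypothesis eirr : irreflexive e.

Lemma PDP_props m : 0 < m ->
  (exists (HT : finType) (h : rel HT) (L : V -> {set HT}),
     is_mfold_cover e m h L /\ num_cover_colorings V h = P_DP e m) /\
  P_DP e m <= chrom e m.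
Proof.
move=> m0.
have ach : dp_achievable e m (chrom e m).
  exists ((V * 'I_m)%type : finType), (h0 e (m:=m)), (@L0 V m); split.
    exact: id_cover.
  by rewrite (ncc esym eirr (id_cover esym eirr m)) id_good.
rewrite /P_DP; case: pselect => [pf|npf]; last first.
  by exfalso; apply: npf; exists (chrom e m); apply/asboolP.
case: ex_minnP => k /asboolP [HT [h [L [cv E]]]] mink; split.
  by exists HT, h, L.
by apply: mink; apply/asboolP.
Qed.

Lemma main g : odd g -> 2 < g -> (forall c, is_cycle e c -> g <= size c) ->
  exists C M0 : nat, forall m : nat, M0 <= m ->
    absdiff (chrom e m) (P_DP e m) * m ^ g <= C * m ^ #|V|.
Proof.
move=> godd g3 gir.
exists #|[set A in powerset (Ed e) | #|A| == g.+1]|, 1 => m m0.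
have [[HT [h [L [cv E]]]] le] := PDP_props m0.
have -> : absdiff (chrom e m) (P_DP e m) = chrom e m - P_DP e m.
  by rewrite /absdiff (eqP (_ : P_DP e m - chrom e m == 0)) ?addn0 // subn_eq0.
have cmp := compare esym eirr godd g3 gir m0 (HL0 m) (HL cv)
  (h0_sym esym (m:=m)) (h'_sym esym cv) (@id_full V e esym eirr m) (h'_full esym eirr cv)
  (fun A sA _ tA => id_cyc eirr m0 sA tA (ltnW (ltnW g3))).
have bnd := SN_bound esym eirr g3 gir m0 (HL0 m) (h0_sym esym (m:=m)) (@id_full V e esym eirr m).
rewrite id_good // in cmp.
have gh := Good_h' e h L.
rewrite -(ncc esym eirr cv) E in gh.
apply: leq_trans bnd; rewrite leq_mul2r; apply/orP; right.
rewrite leq_subLR; apply: leq_trans cmp _; rewrite leq_add2r //.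
Qed.

End Final.

End F1M.
Import F1M.

Theorem theorem4 :
  (forall (V : finType) (e : rel V) (g : nat),
      symmetric e -> irreflexive e -> 3 <= g -> odd g ->
      (girth_is e g \/ girth_is e g.+1) ->
      exists C M0 : nat, forall m : nat, M0 <= m ->
        absdiff (chrom e m) (P_DP e m) * m ^ g <= C * m ^ #|V|)
  /\
  (forall (V : finType) (e : rel V),
      symmetric e -> irreflexive e ->
      exists C M0 : nat, forall m : nat, M0 <= m ->
        absdiff (chrom e m) (P_DP e m) * m ^ 3 <= C * m ^ #|V|).
Proof.
split.
- move=> V e g es ei g3 godd gir; apply: (main es ei godd g3).
  case: gir => [[_ H]|[_ H]] c cc; first exact: H.
  exact: ltnW (H c cc).
- move=> V e es ei; apply: (main es ei (g := 3)) => // c [] //.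
Qed.
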